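(* Let $T_k$ be a tournament on $k$ vertices and let $n$ be a positive integer. If Breaker has a winning strategy in the $(2:1)$ Maker–Breaker game $\mathcal{H}(T_k,n)$, then OBreaker has a winning strategy in the orientation game $Or(T_k,n)$.
   Context: The game $\mathcal{H}(T_k,n)=(X,\mathcal{F}(T_k))$ has board $X=\{(u,v): u,v\in V(K_n),\ u\ne v\}$, the set of ordered pairs of distinct vertices. Its winning sets are $\mathcal{F}(T_k)=\{S\subseteq X: S \text{ is the arc set of a copy of } T_k\}$. The players alternately claim unclaimed elements, Maker claiming $2$ per round and Breaker $1$ per round. Maker wins if she claims all elements of some winning set. The orientation game $Or(T_k,n)$ is played on the edges of $K_n$ by OMaker (moving first) and OBreaker. They alternately choose a previously undirected edge and give it a direction. OMaker wins if the final digraph, containing both players' directed edges, contains a copy of $T_k$; otherwise OBreaker wins. *)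

(* Defs.v *)
From HB Require Import structures.
From mathcomp Require Import all_boot.
Set Implicit Arguments. Unset Strict Implicit. Unset Printing Implicit Defensive.

Definition tournament (k : nat) (T : rel 'I_k) : Prop :=
  (forall i, ~~ T i i) /\ (forall i j, i != j -> T i j = ~~ T j i).

Definition copy_arcs (k n : nat) (T : rel 'I_k) (f : 'I_k -> 'I_n)
  : {set 'I_n * 'I_n} :=
  [set (f p.1, f p.2) | p in [set p : 'I_k * 'I_k | T p.1 p.2]].

Definition contains_copy (k n : nat) (T : rel 'I_k) (D : {set 'I_n * 'I_n}) : Prop :=
  exists f : 'I_k -> 'I_n, injective f /\ forall i j, T i j -> (f i, f j) \in D.

(* A history is the sequence of moves played so far; move number i (from 0)
   is Maker's if i is even and Breaker's if i is odd. A move is the set of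
   board elements claimed in that turn. *)
Definition mset (X : finType) (h : seq {set X}) : {set X} :=
  \bigcup_(i < size h | ~~ odd i) nth set0 h i.
Definition bset (X : finType) (h : seq {set X}) : {set X} :=
  \bigcup_(i < size h | odd i) nth set0 h i.
Definition free (X : finType) (Bd : {set X}) (h : seq {set X}) : {set X} :=
  Bd :\: (mset h :|: bset h).

(* [MB_breaker_wins_from a b Bd W sigma h]: every play of the (a:b) game on
   board Bd with winning sets W which continues the history h and in which
   Breaker follows the (history-dependent) strategy sigma is legal for
   Breaker and ends with Breaker's win (Maker never claims all of some
   winning set). In each turn a player claims min(bias, #free) free elements;
   the game ends when the board is exhausted. *)
Inductive MB_breaker_wins_from (X : finType) (a b : nat) (Bd : {set X})
    (W : {set X} -> Prop) (sigma : seq {set X} -> {set X}) : seq {set X} -> Prop :=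
| MB_end h :
    free Bd h = set0 ->
    ~ (exists S, W S /\ S \subset mset h) ->
    MB_breaker_wins_from a b Bd W sigma h
| MB_maker_turn h :
    ~~ odd (size h) -> free Bd h != set0 ->
    (forall A : {set X}, A \subset free Bd h -> #|A| = minn a #|free Bd h| ->
       MB_breaker_wins_from a b Bd W sigma (rcons h A)) ->
    MB_breaker_wins_from a b Bd W sigma h
| MB_breaker_turn h :
    odd (size h) -> free Bd h != set0 ->
    sigma h \subset free Bd h -> #|sigma h| = minn b #|free Bd h| ->
    MB_breaker_wins_from a b Bd W sigma (rcons h (sigma h)) ->
    MB_breaker_wins_from a b Bd W sigma h.

Definition MB_breaker_has_winning_strategy (X : finType) (a b : nat)
    (Bd : {set X}) (W : {set X} -> Prop) : Prop :=
  exists sigma : seq {set X} -> {set X}, MB_breaker_wins_from a b Bd W sigma [::].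

Definition Hboard (n : nat) : {set 'I_n * 'I_n} := [set p | p.1 != p.2].

Definition HWin (k n : nat) (T : rel 'I_k) (S : {set 'I_n * 'I_n}) : Prop :=
  exists f : 'I_k -> 'I_n, injective f /\ S = copy_arcs T f.

(* A history is the sequence of arcs chosen so far (move i by OMaker if i is
   even, OBreaker if odd). Choosing the arc (u,v) = directing the edge uv
   from u to v; it is legal iff uv is still undirected. *)
Definition orient_legal (n : nat) (h : seq ('I_n * 'I_n)) (a : 'I_n * 'I_n) : bool :=
  [&& a.1 != a.2, a \notin h & (a.2, a.1) \notin h].

Definition digraph_of (n : nat) (h : seq ('I_n * 'I_n)) : {set 'I_n * 'I_n} :=
  [set a | a \in h].

Inductive OB_wins_from (k n : nat) (T : rel 'I_k)
    (sigma : seq ('I_n * 'I_n) -> 'I_n * 'I_n) : seq ('I_n * 'I_n) -> Prop :=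
| OB_end h :
    (forall a, ~~ orient_legal h a) ->
    ~ contains_copy T (digraph_of h) ->
    OB_wins_from T sigma h
| OB_omaker_turn h :
    ~~ odd (size h) -> (exists a, orient_legal h a) ->
    (forall a, orient_legal h a -> OB_wins_from T sigma (rcons h a)) ->
    OB_wins_from T sigma h
| OB_obreaker_turn h :
    odd (size h) -> (exists a, orient_legal h a) ->
    orient_legal h (sigma h) ->
    OB_wins_from T sigma (rcons h (sigma h)) ->
    OB_wins_from T sigma h.

Definition OBreaker_has_winning_strategy (k n : nat) (T : rel 'I_k) : Prop :=
  exists sigma : seq ('I_n * 'I_n) -> 'I_n * 'I_n, OB_wins_from T sigma [::].

(* Main.v *)
Require Import Defs.
From HB Require Import structures.
From mathcomp Require Import all_boot.
Set Implicit Arguments. Unset Strict Implicit. Unset Printing Implicit Defensive.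

Lemma big_rcons_par (X : finType) (h : seq {set X}) (A : {set X}) (P : nat -> bool) :
  \bigcup_(i < size (rcons h A) | P i) nth set0 (rcons h A) i =
  if P (size h) then (\bigcup_(i < size h | P i) nth set0 h i) :|: A
  else \bigcup_(i < size h | P i) nth set0 h i.
Proof.
rewrite size_rcons big_mkcond big_ord_recr /= nth_rcons ltnn eqxx.
rewrite [in RHS]big_mkcond.
rewrite (eq_bigr (fun i : 'I_(size h) => if P i then nth set0 h i else set0)); last first.
  by move=> i _ /=; rewrite nth_rcons ltn_ord.
by case: (P (size h)); rewrite ?setU0.
Qed.

Lemma mset_rcons (X : finType) (h : seq {set X}) A :
  mset (rcons h A) = if odd (size h) then mset h else mset h :|: A.
Proof. by rewrite /mset (big_rcons_par h A (fun i => ~~ odd i)); case: odd. Qed.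

Lemma bset_rcons (X : finType) (h : seq {set X}) A :
  bset (rcons h A) = if odd (size h) then bset h :|: A else bset h.
Proof. by rewrite /bset (big_rcons_par h A odd). Qed.

Lemma ext_subset (X : finType) (F : {set X}) m : forall Y : {set X},
  Y \subset F -> #|Y| <= m -> m <= #|F| ->
  exists A : {set X}, [/\ Y \subset A, A \subset F & #|A| = m].
Proof.
move=> Y; move: {2}(m - #|Y|) (erefl (m - #|Y|)) => d.
elim: d Y => [|d IH] Y Hd YF Ym mF.
  exists Y; split => //; apply/eqP; rewrite eqn_leq Ym /=.
  by rewrite -subn_eq0 Hd.
have lt : #|Y| < #|F|.
  by apply: (leq_trans _ mF); rewrite -subn_gt0 Hd.
have [z zF zY] : exists2 z, z \in F & z \notin Y.
  have : Y \proper F by rewrite properEcard YF lt.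
  by case/properP => _ [z ? ?]; exists z.
have e1 : m - #|z |: Y| = d by rewrite cardsU1 zY addnC subnDA Hd subn1.
have e2 : z |: Y \subset F by rewrite subUset sub1set zF YF.
have e3 : #|z |: Y| <= m by rewrite cardsU1 zY add1n -subn_gt0 Hd.
have [A [H1 H2 H3]] := IH (z |: Y) e1 e2 e3 mF.
exists A; split => //; apply: subset_trans H1; exact: subsetUr.
Qed.

Lemma MB_maker_inv (X : finType) a b Bd W sg (h : seq {set X}) :
  MB_breaker_wins_from a b Bd W sg h -> ~~ odd (size h) -> free Bd h != set0 ->
  forall A : {set X}, A \subset free Bd h -> #|A| = minn a #|free Bd h| ->
  MB_breaker_wins_from a b Bd W sg (rcons h A).
Proof.
case=> {}h.
- by move=> -> _ _; rewrite eqxx.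
- by move=> _ _ H _ _; exact: H.
- by move=> -> .
Qed.

Lemma MB_breaker_inv (X : finType) a b Bd W sg (h : seq {set X}) :
  MB_breaker_wins_from a b Bd W sg h -> odd (size h) -> free Bd h != set0 ->
  [/\ sg h \subset free Bd h, #|sg h| = minn b #|free Bd h| &
  MB_breaker_wins_from a b Bd W sg (rcons h (sg h))].
Proof.
case=> {}h.
- by move=> -> _ _; rewrite eqxx.
- by move=> /negPf ->.
- by move=> _ _ H1 H2 H3 _ _; split.
Qed.

Lemma MB_nowin (X : finType) a b Bd W sg (h : seq {set X}) :
  MB_breaker_wins_from a b Bd W sg h -> ~ (exists S, W S /\ S \subset mset h).
Proof.
elim=> {}h.
- by [].
- move=> ev nz _ IH [S [WS SM]].
  have h0 : #|(set0 : {set X})| <= minn a #|free Bd h| by rewrite cards0.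
  have [A [_ AF Ac]] := @ext_subset X (free Bd h) (minn a #|free Bd h|) set0
     (sub0set _) h0 (geq_minr _ _).
  apply: (IH A AF Ac); exists S; split => //.
  by rewrite mset_rcons (negPf ev); apply: subset_trans SM (subsetUl _ _).
- move=> od nz _ _ _ IH [S [WS SM]]; apply: IH; exists S; split => //.
  by rewrite mset_rcons od.
Qed.

Definition rv (n : nat) (x : 'I_n * 'I_n) : 'I_n * 'I_n := (x.2, x.1).

Definition Eset (n : nat) (h : seq ('I_n * 'I_n)) : {set 'I_n * 'I_n} :=
  [set x | (x \in h) || (rv x \in h)].

Definition mmove (n : nat) (h : seq ('I_n * 'I_n)) (a : 'I_n * 'I_n) : {set 'I_n * 'I_n} :=
  if h is [::] then [set a; rv a] else [set a; last a h].

Definition sstep (n : nat) (sg : seq {set 'I_n * 'I_n} -> {set 'I_n * 'I_n})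
  (st : seq {set 'I_n * 'I_n} * seq ('I_n * 'I_n)) (x : 'I_n * 'I_n) :=
  if odd (size st.2) then (st.1, rcons st.2 x)
  else let hm1 := rcons st.1 (mmove st.2 x) in (rcons hm1 (sg hm1), rcons st.2 x).

Definition simf n sg (ho : seq ('I_n * 'I_n)) := foldl (@sstep n sg) ([::], [::]) ho.
Definition sim n sg (ho : seq ('I_n * 'I_n)) := (simf sg ho).1.

Lemma simf2 n sg (ho : seq ('I_n * 'I_n)) : (simf sg ho).2 = ho.
Proof.
elim/last_ind: ho => [//|ho x IH].
by rewrite /simf foldl_rcons /sstep -/(simf sg ho) IH; case: odd.
Qed.

Lemma sim_rcons_even n sg (ho : seq ('I_n * 'I_n)) x : ~~ odd (size ho) ->
  sim sg (rcons ho x) = rcons (rcons (sim sg ho) (mmove ho x)) (sg (rcons (sim sg ho) (mmove ho x))).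
Proof.
move=> /negPf ev.
by rewrite /sim /simf foldl_rcons /sstep -/(simf sg ho) simf2 ev.
Qed.

Lemma sim_rcons_odd n sg (ho : seq ('I_n * 'I_n)) x : odd (size ho) ->
  sim sg (rcons ho x) = sim sg ho.
Proof.
move=> od.
by rewrite /sim /simf foldl_rcons /sstep -/(simf sg ho) simf2 od.
Qed.

Definition sigo n (d : 'I_n * 'I_n) sg (ho : seq ('I_n * 'I_n)) : 'I_n * 'I_n :=
  match [pick y in last set0 (sim sg ho) | orient_legal ho (rv y)] with
  | Some y => rv y
  | None => odflt d [pick z | orient_legal ho z]
  end.

Lemma rvK n : involutive (@rv n). Proof. by case. Qed.

Lemma legal_notE n (h : seq ('I_n * 'I_n)) a : orient_legal h a -> a \notin Eset h.
Proof. by case/and3P=> _ h1 h2; rewrite inE negb_or h1. Qed.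

Lemma legal_board n (h : seq ('I_n * 'I_n)) a : orient_legal h a -> a \in Hboard n.
Proof. by case/and3P=> h1 _ _; rewrite inE. Qed.

Lemma Eset_rcons n (h : seq ('I_n * 'I_n)) x : Eset h \subset Eset (rcons h x).
Proof. by apply/subsetP=> y; rewrite !inE !mem_rcons !inE => /orP[]->; rewrite ?orbT. Qed.

Lemma Eset_last n (h : seq ('I_n * 'I_n)) x : (x \in Eset (rcons h x)) && (rv x \in Eset (rcons h x)).
Proof. by rewrite !inE !mem_rcons !inE rvK eqxx !orbT. Qed.

Lemma legal_rcons n (h : seq ('I_n * 'I_n)) a z :
  orient_legal (rcons h a) z -> orient_legal h z && (z != a).
Proof.
case/and3P=> h1; rewrite !mem_rcons !inE !negb_or => /andP[za h2] /andP[_ h3].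
by rewrite /orient_legal h1 h2 h3 za.
Qed.

Lemma legal_card n (h : seq ('I_n * 'I_n)) a : orient_legal h a ->
  #|[set z | orient_legal (rcons h a) z]| < #|[set z | orient_legal h z]|.
Proof.
move=> la; apply: proper_card; apply/properP; split.
  by apply/subsetP=> z; rewrite !inE => /legal_rcons/andP[].
exists a; first by rewrite inE.
by rewrite inE; apply/negP=> /legal_rcons; rewrite eqxx andbF.
Qed.

Lemma copy_false k n (T : rel 'I_k) sg (h : seq {set 'I_n * 'I_n}) (ho : seq ('I_n * 'I_n)) :
  MB_breaker_wins_from 2 1 (Hboard n) (@HWin k n T) sg h ->
  {subset ho <= mset h} -> ~ contains_copy T (digraph_of ho).
Proof.
move=> D sub [f [fi Hf]]; apply: (MB_nowin D); exists (copy_arcs T f); split.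
  by exists f.
apply/subsetP=> x /imsetP[p]; rewrite inE => Tp ->.
by apply: sub; move: (Hf _ _ Tp); rewrite inE.
Qed.

Lemma mset_nil (X : finType) : mset ([::] : seq {set X}) = set0.
Proof. by rewrite /mset big_ord0. Qed.
Lemma bset_nil (X : finType) : bset ([::] : seq {set X}) = set0.
Proof. by rewrite /bset big_ord0. Qed.

Lemma in_free (X : finType) (Bd : {set X}) h x :
  (x \in free Bd h) = [&& x \in Bd, x \notin mset h & x \notin bset h].
Proof. by rewrite /free !inE negb_or andbC andbA. Qed.

Definition Inv n (ho : seq ('I_n * 'I_n)) (hm : seq {set 'I_n * 'I_n}) : Prop :=
  [/\ size hm = size ho, mset hm \subset Eset ho, bset hm \subset Eset ho,
      {in ho, forall x, x.1 != x.2} &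
      forall ho' b, ho = rcons ho' b ->
        [/\ {subset ho' <= mset hm}, b \notin mset hm & b \notin bset hm]].

Lemma end_case k n (T : rel 'I_k) sg (ho : seq ('I_n * 'I_n)) hm :
  ~~ odd (size ho) -> Inv ho hm ->
  MB_breaker_wins_from 2 1 (Hboard n) (@HWin k n T) sg hm ->
  ~ contains_copy T (digraph_of ho).
Proof.
move=> ev [I1 I2 I3 I4 I5] D.
case/lastP: ho ev I1 I2 I3 I4 I5 => [|ho' b] ev I1 I2 I3 I4 I5.
  by apply: copy_false D _.
have [S1 bm bb] := I5 ho' b erefl.
have bB : b \in Hboard n by rewrite inE; apply: I4; rewrite mem_rcons inE eqxx.
have bF : b \in free (Hboard n) hm by rewrite in_free bB bm bb.
have Fnz : free (Hboard n) hm != set0 by apply/set0Pn; exists b.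
have c1 : #|[set b]| <= minn 2 #|free (Hboard n) hm|.
  by rewrite cards1 leq_min /= card_gt0.
have sF : [set b] \subset free (Hboard n) hm by rewrite sub1set.
have [A [bA AF Ac]] := ext_subset sF c1 (geq_minr _ _).
have ev' : ~~ odd (size hm) by rewrite I1.
have D' := MB_maker_inv D ev' Fnz AF Ac.
apply: copy_false D' _ => x; rewrite mset_rcons (negPf ev') inE mem_rcons inE.
case/orP=> [/eqP -> | /S1 ->]; last by [].
by rewrite (subsetP bA) ?orbT // inE.
Qed.

Lemma step_case k n (T : rel 'I_k) d sg (ho : seq ('I_n * 'I_n)) a :
  ~~ odd (size ho) -> Inv ho (sim sg ho) ->
  MB_breaker_wins_from 2 1 (Hboard n) (@HWin k n T) sg (sim sg ho) ->
  orient_legal ho a ->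
  (forall ho2 : seq ('I_n * 'I_n),
     #|[set z | orient_legal ho2 z]| < #|[set z | orient_legal ho z]| ->
     ~~ odd (size ho2) -> Inv ho2 (sim sg ho2) ->
     MB_breaker_wins_from 2 1 (Hboard n) (@HWin k n T) sg (sim sg ho2) ->
     OB_wins_from T (sigo d sg) ho2) ->
  OB_wins_from T (sigo d sg) (rcons ho a).
Proof.
move=> ev [I1 I2 I3 I4 I5] D la IH.
set hm := sim sg ho in I1 I2 I3 I4 I5 D.
set A := mmove ho a.
have ev' : ~~ odd (size hm) by rewrite I1.
have aB := legal_board la.
have aE := legal_notE la.
have aF : a \in free (Hboard n) hm.
  rewrite in_free aB /=; apply/andP; split; apply/negP => H.
    by rewrite (subsetP I2 _ H) in aE.
  by rewrite (subsetP I3 _ H) in aE.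
have aL : a \in Eset (rcons ho a) by case/andP: (Eset_last ho a).
have [AF Ac AE Acov] : [/\ A \subset free (Hboard n) hm, #|A| = 2,
    A \subset Eset (rcons ho a) & {subset rcons ho a <= mset hm :|: A}].
  have [Ho|[ho' [b Ho]]] : ho = [::] \/ exists ho' b, ho = rcons ho' b.
    by case/lastP: (ho) => [|s y]; [left | right; exists s, y].
  - have mE : mset hm = set0.
      by apply/eqP; rewrite -subset0; apply: subset_trans I2 _; rewrite Ho;
         apply/subsetP=> y; rewrite inE.
    have AE' : A = [set a; rv a] by rewrite /A Ho.
    have arv : a != rv a.
      by apply/eqP=> e; move: aB; rewrite inE {2}e eqxx.
    split.
    + rewrite AE' subUset !sub1set aF /= in_free mE.
      apply/and3P; split; first by rewrite inE /= eq_sym; move: aB; rewrite inE.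
        by rewrite inE.
      by apply/negP=> H; move: (subsetP I3 _ H); rewrite Ho inE !in_nil.
    + by rewrite AE' cards2 arv.
    + by rewrite AE' subUset !sub1set; case/andP: (Eset_last ho a) => -> ->.
    + move=> y; rewrite Ho /= inE => /eqP ->.
      by rewrite AE' !inE eqxx orbT.
  - have AE' : A = [set a; b].
      rewrite /A /mmove Ho; case E: (rcons ho' b) => [|y s].
        by move/eqP: E; rewrite -size_eq0 size_rcons.
      by rewrite -E last_rcons.
    have [S1 bm bb] := I5 ho' b Ho.
    have bho : b \in ho by rewrite Ho mem_rcons inE eqxx.
    have bB : b \in Hboard n by rewrite inE; apply: I4.
    have ab : a != b.
      by apply/eqP=> e; case/and3P: la => _ + _; rewrite e bho.
    split.
    + by rewrite AE' subUset !sub1set aF in_free bB bm bb.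
    + by rewrite AE' cards2 ab.
    + rewrite AE' subUset !sub1set aL /=.
      by apply: (subsetP (Eset_rcons ho a)); rewrite inE bho.
    + move=> y; rewrite mem_rcons inE => /orP[/eqP->|].
        by rewrite AE' !inE eqxx orbT.
      rewrite Ho mem_rcons inE => /orP[/eqP->|/S1 H]; last by rewrite inE H.
      by rewrite AE' !inE eqxx !orbT.
have Fnz : free (Hboard n) hm != set0 by apply/set0Pn; exists a.
have Ac' : #|A| = minn 2 #|free (Hboard n) hm|.
  by rewrite Ac; apply/esym/minn_idPl; rewrite -Ac subset_leq_card.
have D1 := MB_maker_inv D ev' Fnz AF Ac'.
set hm1 := rcons hm A in D1.
have M1 : mset hm1 = mset hm :|: A by rewrite /hm1 mset_rcons (negPf ev').
have B1 : bset hm1 = bset hm by rewrite /hm1 bset_rcons (negPf ev').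
have MS : mset hm1 \subset Eset (rcons ho a).
  by rewrite M1 subUset AE andbT (subset_trans I2 (Eset_rcons _ _)).
have BS : bset hm1 \subset Eset (rcons ho a).
  by rewrite B1 (subset_trans I3 (Eset_rcons _ _)).
case: (pickP (fun z => orient_legal (rcons ho a) z)) => [z lz | nol]; last first.
  apply: OB_end; first by move=> y; rewrite nol.
  by apply: copy_false D1 _ => y /Acov; rewrite M1.
have od1 : odd (size hm1) by rewrite /hm1 size_rcons /= ev'.
have Esim : sim sg (rcons ho a) = rcons hm1 (sg hm1) by rewrite sim_rcons_even.
have zF : z \in free (Hboard n) hm1.
  rewrite in_free (legal_board lz) /=; apply/andP; split; apply/negP => H.
    by move: (legal_notE lz); rewrite (subsetP MS _ H).
  by move: (legal_notE lz); rewrite (subsetP BS _ H).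
have Fnz1 : free (Hboard n) hm1 != set0 by apply/set0Pn; exists z.
have [cF cc D2] := MB_breaker_inv D1 od1 Fnz1.
have : #|sg hm1| == 1.
  by rewrite cc; apply/eqP/minn_idPl; rewrite card_gt0.
case/cards1P => x Ec.
have xF : x \in free (Hboard n) hm1 by apply: (subsetP cF); rewrite Ec inE.
move: xF; rewrite in_free => /and3P [xB xm xb].
set b' := sigo d sg (rcons ho a).
have [lb xE bx] : [/\ orient_legal (rcons ho a) b', x \in Eset (rcons (rcons ho a) b') & b' != x].
  rewrite /b' /sigo Esim last_rcons Ec.
  case: pickP => [y /andP [/set1P -> ly] | none].
    split => //; first by case/andP: (Eset_last (rcons ho a) (rv x)); rewrite rvK.
    by apply/eqP=> e; move: xB; rewrite inE -{1}e /= eqxx.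
  have nl : orient_legal (rcons ho a) (rv x) = false by move: (none x); rewrite inE eqxx.
  have xE0 : x \in Eset (rcons ho a).
    move: nl xB; case: x {Ec xm xb none} => x1 x2.
    move=> nl'; rewrite inE /= => x12; move: nl'.
    rewrite /orient_legal /= eq_sym x12 /= => /negbT; rewrite negb_and !negbK.
    by case/orP => H; rewrite inE /rv /= H ?orbT.
  case: pickP => [z' lz' | nz]; last by rewrite nz in lz.
  split => //=.
    by apply: (subsetP (Eset_rcons _ _)).
  by apply/eqP=> e; move: (legal_notE lz'); rewrite e xE0.
apply: OB_obreaker_turn; first by rewrite size_rcons /= ev.
  by exists z.
  exact: lb.
apply: IH.
- by apply: (ltn_trans (legal_card lb)); apply: legal_card.
- by rewrite !size_rcons /= negbK.
- rewrite sim_rcons_odd; last by rewrite size_rcons /= ev.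
  rewrite Esim Ec.
  split.
  + by rewrite !size_rcons I1.
  + by rewrite mset_rcons od1 (subset_trans MS (Eset_rcons _ _)).
  + rewrite bset_rcons od1 subUset sub1set xE andbT.
    exact: (subset_trans BS (Eset_rcons _ _)).
  + move=> y; rewrite mem_rcons inE => /orP [/eqP->|].
      by move: (legal_board lb); rewrite inE.
    rewrite mem_rcons inE => /orP [/eqP->|H]; last exact: I4 H.
    by move: aB; rewrite inE.
  + move=> ho'' b'' /rcons_inj [<- <-]; split.
    * by move=> y /Acov; rewrite mset_rcons od1 M1.
    * by rewrite mset_rcons od1; apply/negP=> /(subsetP MS) H; move: (legal_notE lb); rewrite H.
    * rewrite bset_rcons od1 inE negb_or inE bx andbT.
      by apply/negP=> /(subsetP BS) H; move: (legal_notE lb); rewrite H.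
- rewrite sim_rcons_odd; last by rewrite size_rcons /= ev.
  by rewrite Esim.
Qed.

Lemma main_step k n (T : rel 'I_k) d sg m : forall ho : seq ('I_n * 'I_n),
  #|[set z | orient_legal ho z]| <= m -> ~~ odd (size ho) -> Inv ho (sim sg ho) ->
  MB_breaker_wins_from 2 1 (Hboard n) (@HWin k n T) sg (sim sg ho) ->
  OB_wins_from T (sigo d sg) ho.
Proof.
elim: m => [|m IH] ho Hm ev I D.
  case: (pickP (fun z => orient_legal ho z)) => [a la | nol].
    by move: Hm; rewrite leqn0 => /eqP/cards0_eq/setP/(_ a); rewrite !inE la.
  apply: OB_end; first by move=> y; rewrite nol.
  exact: end_case ev I D.
case: (pickP (fun z => orient_legal ho z)) => [a la | nol]; last first.
  apply: OB_end; first by move=> y; rewrite nol.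
  exact: end_case ev I D.
apply: OB_omaker_turn => //; first by exists a.
move=> a' la'; apply: step_case => // ho2 lt ev2 I2 D2.
by apply: IH => //; rewrite -ltnS; apply: leq_trans lt Hm.
Qed.

Unset Implicit Arguments.
Set Strict Implicit.

Theorem mainTheorem7 (k : nat) (T : rel 'I_k) (n : nat) :
  tournament T -> 0 < n ->
  MB_breaker_has_winning_strategy 2 1 (Hboard n) (@HWin k n T) ->
  @OBreaker_has_winning_strategy k n T.
Proof.
move=> _ n0 [sg D].
exists (sigo (Ordinal n0, Ordinal n0) sg).
apply: (@main_step k n T _ sg #|[set z | orient_legal [::] z]|) => //.
split => //.
- by rewrite /sim /= mset_nil sub0set.
- by rewrite /sim /= bset_nil sub0set.
- by move=> ho' b /esym /eqP; rewrite -size_eq0 size_rcons.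
Qed.
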